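(* Under the standing assumptions (in particular $k\ge\frac{\tau\ln\tau}{\tau-1}$ and $r<r_{cr}$), let $\varphi(s)=r\ln\!\left(1+\frac{p}{1-p}s^k\right)-s$ and $-\beta=\max_{\eta_2\le s\le\eta_3}\varphi(s)$. Then $\beta>0$, and $\Phi(ns)\le\exp\{-(\beta+o(1))m\}$ holds uniformly for all $s\in[\eta_2,\eta_3]$ with $ns$ an integer, as $n\to\infty$.
   Context: Parameters: integer $k\ge2$, constants $\alpha>0$, $r>0$, $0<p<1$; $d=n^{\alpha}$ (treated as an integer), $m=n\ln d$, $\tau=\frac1{1-p}$, $r_{cr}=\frac1{\ln\tau}$. Standing assumptions: $(2k-1)\alpha>1$, $k\alpha\le1$, $k\ge\frac{\tau\ln\tau}{\tau-1}$, and $r<r_{cr}$. Notation: $f(s)=1+\frac{p}{1-p}\cdot\frac{s^k-d^{-k}}{1-d^{-k}}$ for $s\in[0,1]$; $B(S)=\binom{n}{S}\left(\frac1d\right)^{S}\left(1-\frac1d\right)^{n-S}$; $W(S)=f(S/n)^{rm}$; $\Phi(S)=B(S)W(S)$. Let $\alpha_0=\frac{(2k-1)\alpha-1}{2(k-1)}$, and let $\eta_2,\eta_3,\mu$ be constants with $0<\eta_2<\eta_3<1$, $\alpha_0/\alpha-\mu\eta_2^{k-1}>0$, $\mu>\frac{kpr}{1-p}$, and $r\ln(1-p)+\eta_3>0$. *)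

(* Defs.v *)
From Stdlib Require Import Reals.
Open Scope R_scope.

(* d = n^alpha, "treated as an integer": we take d_n = floor(n^alpha). *)
Definition dd (alpha : R) (n : nat) : R := IZR (Int_part (Rpower (INR n) alpha)).
Definition mm (alpha : R) (n : nat) : R := INR n * ln (dd alpha n).
Definition tau (p : R) : R := 1 / (1 - p).
Definition r_cr (p : R) : R := 1 / ln (tau p).
Definition alpha0 (k : nat) (alpha : R) : R :=
  ((2 * INR k - 1) * alpha - 1) / (2 * (INR k - 1)).

Definition ff (k : nat) (p d s : R) : R :=
  1 + p / (1 - p) * ((s ^ k - / d ^ k) / (1 - / d ^ k)).

Definition binomR (n S : nat) : R := if Nat.leb S n then Binomial.C n S else 0.

Definition BB (alpha : R) (n S : nat) : R :=
  binomR n S * (/ dd alpha n) ^ S * (1 - / dd alpha n) ^ (n - S).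
Definition WW (k : nat) (alpha r p : R) (n S : nat) : R :=
  Rpower (ff k p (dd alpha n) (INR S / INR n)) (r * mm alpha n).
Definition PPhi (k : nat) (alpha r p : R) (n S : nat) : R :=
  BB alpha n S * WW k alpha r p n S.

Definition varphi (k : nat) (r p s : R) : R :=
  r * ln (1 + p / (1 - p) * s ^ k) - s.

(* Main.v *)
Require Import Defs.
From Stdlib Require Import Reals Lra Lia.
From Coquelicot Require Import Coquelicot.
Open Scope R_scope.

Lemma exp_conv (x L : R) : 0 < L -> 0 <= x <= L ->
  exp (- x) <= (1 - x / L) + (x / L) * exp (- L).
Proof.
  intros HL Hx.
  set (t := x / L).
  assert (Ht : 0 <= t <= 1).
  { unfold t; split. apply Rdiv_le_0_compat; lra.
    apply (Rmult_le_reg_r L); try lra. unfold Rdiv; rewrite Rmult_assoc, Rinv_l; lra. }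
  assert (Hx' : x = t * L) by (unfold t; field; lra).
  assert (E0 : exp 0 = exp (-x) * exp x) by (rewrite <- exp_plus; f_equal; ring).
  assert (E1 : exp (-L) = exp (-x) * exp (x - L)) by (rewrite <- exp_plus; f_equal; ring).
  rewrite exp_0 in E0.
  pose proof (exp_ineq1_le x). pose proof (exp_ineq1_le (x - L)).
  pose proof (exp_pos (-x)).
  rewrite E1.
  assert (exp (-x) * ((1 - t) * (1 + x) + t * (1 + (x - L))) <=
          (1 - t) * (exp (-x) * exp x) + t * (exp (-x) * exp (x - L))).
  { assert ((1 - t) * (exp (-x) * (1 + x)) <= (1 - t) * (exp (-x) * exp x)).
    { apply Rmult_le_compat_l; [lra|]. apply Rmult_le_compat_l; lra. }
    assert (t * (exp (-x) * (1 + (x - L))) <= t * (exp (-x) * exp (x - L))).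
    { apply Rmult_le_compat_l; [lra|]. apply Rmult_le_compat_l; lra. }
    nra. }
  rewrite <- E0 in H2.
  replace ((1 - t) * (1 + x) + t * (1 + (x - L))) with 1 in H2 by (rewrite Hx'; ring).
  lra.
Qed.

Lemma key_pt (K L x : R) : 0 < L -> K * (1 - exp (- L)) >= L -> 0 < x <= L ->
  x <= K * (1 - exp (- x)).
Proof.
  intros HL HK Hx.
  pose proof (exp_conv x L HL ltac:(lra)).
  assert (HeL : exp (-L) < 1) by (rewrite <- exp_0; apply exp_increasing; lra).
  assert (HK0 : K > 0).
  { destruct (Rle_or_lt K 0); auto. assert (K * (1 - exp (-L)) <= 0) by nra. lra. }
  assert (1 - exp (-x) >= (x / L) * (1 - exp (-L))) by lra.
  assert (Hxl : 0 <= x / L) by (apply Rdiv_le_0_compat; lra).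
  assert (K * (1 - exp (-x)) >= (x / L) * (K * (1 - exp (-L)))) by nra.
  assert ((x / L) * (K * (1 - exp (-L))) >= (x / L) * L) by nra.
  replace (x / L * L) with x in H2 by (field; lra). lra.
Qed.

Lemma key (k : nat) (L s : R) : 0 < L -> INR k * (1 - exp (- L)) >= L -> 0 < s <= 1 ->
  1 + (exp L - 1) * s ^ k <= exp (s * L).
Proof.
  intros HL HK Hs.
  destruct (Req_dec s 1) as [->|Hs1].
  { rewrite pow1, Rmult_1_l; lra. }
  set (K := INR k) in *.
  set (E := fun x => ln (exp (x * L) - 1) - K * ln x).
  set (E' := fun x => L * exp (x * L) / (exp (x * L) - 1) - K / x).
  assert (Hpos : forall x, 0 < x -> 0 < exp (x * L) - 1).
  { intros x Hx. assert (1 < exp (x*L)). rewrite <- exp_0; apply exp_increasing; nra. lra. }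
  destruct (MVT_cor2 E E' s 1) as [c [Hc1 Hc2]]; [lra| |].
  { intros c Hc. apply is_derive_Reals. unfold E, E'.
    pose proof (Hpos c ltac:(lra)).
    auto_derive. split; [lra| split; [lra|auto]].
    field; lra. }
  assert (HE' : E' c <= 0).
  { unfold E'. pose proof (Hpos c ltac:(lra)) as Hp.
    assert (Hx : c * L <= K * (1 - exp (-(c * L)))) by (apply (key_pt K L (c * L)); auto; split; nra).
    rewrite exp_Ropp in Hx.
    set (e := exp (c * L)) in *.
    assert (He : 0 < e) by apply exp_pos.
    assert (c * L * e <= K * (e - 1)).
    { replace (K * (e - 1)) with (K * (1 - / e) * e) by (field; lra). nra. }
    assert (L * e / (e - 1) - K / c = (c * L * e - K * (e - 1)) / (c * (e - 1))) by (field; lra).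
    rewrite H0. unfold Rdiv. apply Rmult_le_0_r; [lra|]. left; apply Rinv_0_lt_compat; nra. }
  assert (HE : E s >= E 1) by nra.
  unfold E in HE. rewrite ln_1, Rmult_1_l, Rmult_0_r, Rminus_0_r in HE.
  assert (Hq : 0 < exp L - 1) by (pose proof (Hpos 1 ltac:(lra)); rewrite Rmult_1_l in H; lra).
  assert (Hsk : 0 < s ^ k) by (apply pow_lt; lra).
  assert (HL2 : ln ((exp L - 1) * s ^ k) <= ln (exp (s * L) - 1)).
  { rewrite ln_mult, ln_pow by lra. fold K. lra. }
  destruct (Rle_or_lt ((exp L - 1) * s ^ k) (exp (s * L) - 1)); [lra|].
  pose proof (ln_increasing _ _ (Hpos s ltac:(lra)) H). lra.
Qed.
Lemma term_le_sum (F : nat -> R) (n S : nat) : (forall i, 0 <= F i) -> (S <= n)%nat ->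
  F S <= sum_f_R0 F n.
Proof.
  intros HF. induction n; intros HS.
  - replace S with 0%nat by lia. simpl; lra.
  - simpl. destruct (Nat.eq_dec S (Datatypes.S n)) as [->|].
    + pose proof (cond_pos_sum F n HF). lra.
    + pose proof (IHn ltac:(lia)). pose proof (HF (Datatypes.S n)). lra.
Qed.

Lemma C_nonneg n i : 0 <= Binomial.C n i.
Proof.
  unfold Binomial.C. left. apply Rdiv_lt_0_compat. apply INR_fact_lt_0.
  apply Rmult_lt_0_compat; apply INR_fact_lt_0.
Qed.

Lemma C_le_2pow n S : (S <= n)%nat -> Binomial.C n S <= 2 ^ n.
Proof.
  intros HS. replace 2 with (1 + 1) by lra. rewrite binomial.
  assert (E : sum_f_R0 (fun i => Binomial.C n i * 1 ^ i * 1 ^ (n - i)) n = sum_f_R0 (fun i => Binomial.C n i) n).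
  { apply sum_eq. intros; rewrite !pow1; ring. }
  rewrite E. apply (term_le_sum (fun i => Binomial.C n i)); auto. intros; apply C_nonneg.
Qed.

Lemma exp_le (x y : R) : x <= y -> exp x <= exp y.
Proof. intros [H|H]; [left; apply exp_increasing; auto| rewrite H; lra]. Qed.

Theorem lemma4p8 (k : nat) (alpha r p eta2 eta3 mu : R) :
  (2 <= k)%nat -> 0 < alpha -> 0 < r -> 0 < p < 1 ->
  (2 * INR k - 1) * alpha > 1 -> INR k * alpha <= 1 ->
  INR k >= tau p * ln (tau p) / (tau p - 1) ->
  r < r_cr p ->
  0 < eta2 -> eta2 < eta3 -> eta3 < 1 ->
  alpha0 k alpha / alpha - mu * eta2 ^ (k - 1) > 0 ->
  mu > INR k * p * r / (1 - p) ->
  r * ln (1 - p) + eta3 > 0 ->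
  forall beta : R,
    (exists s, eta2 <= s <= eta3 /\ varphi k r p s = - beta) ->
    (forall s, eta2 <= s <= eta3 -> varphi k r p s <= - beta) ->
    beta > 0 /\
    (forall eps : R, eps > 0 ->
       exists N : nat, forall n S : nat, (N <= n)%nat ->
         eta2 <= INR S / INR n <= eta3 ->
         PPhi k alpha r p n S <= exp (- (beta - eps) * mm alpha n)).
Proof.
  intros Hk Ha Hr Hp _ _ HkT Hrc He2 He23 He3 _ _ _ beta [s0 [Hs0 Hv0]] Hvar.
  assert (Htau : tau p = 1 / (1 - p)) by reflexivity.
  assert (Htau1 : 1 < tau p).
  { rewrite Htau. apply (Rmult_lt_reg_r (1 - p)); [lra|]. field_simplify; lra. }
  set (L := ln (tau p)) in *.
  assert (HL : 0 < L) by (unfold L; rewrite <- ln_1; apply ln_increasing; lra).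
  assert (HeL : exp L = tau p) by (unfold L; apply exp_ln; lra).
  assert (Hq : p / (1 - p) = exp L - 1) by (rewrite HeL, Htau; field; lra).
  assert (HKp : INR k * p >= L).
  { assert (E : tau p * L / (tau p - 1) = L / p) by (rewrite Htau; field; lra).
    rewrite E in HkT. apply Rle_ge. apply (Rmult_le_reg_r (/ p)). apply Rinv_0_lt_compat; lra.
    replace (INR k * p * / p) with (INR k) by (field; lra). unfold Rdiv in HkT; lra. }
  assert (HK : INR k * (1 - exp (- L)) >= L).
  { rewrite exp_Ropp, HeL, Htau. replace (1 - / (1 / (1 - p))) with p by (field; lra). auto. }
  assert (HrL : r * L < 1).
  { unfold r_cr in Hrc. fold L in Hrc. apply (Rmult_lt_compat_r L) in Hrc; auto.
    replace (1 / L * L) with 1 in Hrc by (field; lra). lra. }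
  assert (Hbound : forall s, 0 < s <= 1 -> ln (1 + p / (1 - p) * s ^ k) <= s * L).
  { intros s Hs. rewrite Hq. rewrite <- (ln_exp (s * L)). apply ln_le.
    - assert (0 <= s ^ k) by (apply pow_le; lra). assert (0 < exp L - 1) by lra. nra.
    - apply key; auto. }
  split.
  { unfold varphi in Hv0. pose proof (Hbound s0 ltac:(lra)).
    assert (r * ln (1 + p / (1 - p) * s0 ^ k) <= r * (s0 * L)) by (apply Rmult_le_compat_l; lra).
    nra. }
  intros eps Heps.
  set (D0 := Rmax 2 (Rmax (/ eta2) (exp (ln 2 / eps)))).
  assert (HD2 : 2 <= D0) by apply Rmax_l.
  assert (HDe : / eta2 <= D0) by (unfold D0; eapply Rle_trans; [apply Rmax_l|apply Rmax_r]).
  assert (HDx : exp (ln 2 / eps) <= D0) by (unfold D0; eapply Rle_trans; [apply Rmax_r|apply Rmax_r]).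
  set (X := exp (ln (D0 + 1) / alpha)).
  assert (HX : 0 < X) by apply exp_pos.
  destruct (archimed_cor1 (/ X)) as [N [HN HN0]]; [apply Rinv_0_lt_compat; auto|].
  assert (HNX : X < INR N).
  { destruct (Rle_or_lt (INR N) X); auto.
    assert (0 < INR N) by (apply lt_0_INR; lia).
    pose proof (Rinv_le_contravar _ _ H0 H). lra. }
  exists N. intros n S HnN HS.
  assert (Hn : X < INR n) by (pose proof (le_INR _ _ HnN); lra).
  assert (Hn0 : 0 < INR n) by lra.
  set (d := dd alpha n).
  assert (Hd : D0 < d).
  { unfold d, dd. pose proof (base_Int_part (Rpower (INR n) alpha)) as [_ H1].
    assert (D0 + 1 < Rpower (INR n) alpha).
    { unfold Rpower. rewrite <- (exp_ln (D0 + 1)) by lra. apply exp_increasing.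
      assert (ln X < ln (INR n)) by (apply ln_increasing; auto).
      unfold X in H. rewrite ln_exp in H.
      apply (Rmult_lt_compat_l alpha) in H; auto.
      replace (alpha * (ln (D0 + 1) / alpha)) with (ln (D0 + 1)) in H by (field; lra). lra. }
    lra. }
  assert (Hd1 : 1 < d) by lra.
  assert (Hlnd : 0 < ln d) by (rewrite <- ln_1; apply ln_increasing; lra).
  assert (Hln2 : ln 2 <= eps * ln d).
  { assert (ln 2 / eps <= ln d).
    { rewrite <- (ln_exp (ln 2 / eps)). apply ln_le. apply exp_pos. lra. }
    apply (Rmult_le_compat_l eps) in H; [|lra].
    replace (eps * (ln 2 / eps)) with (ln 2) in H by (field; lra). lra. }
  set (s := INR S / INR n) in *.
  assert (HSn : (S <= n)%nat).
  { apply Nat.lt_le_incl, INR_lt. assert (s * INR n < INR n) by nra.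
    unfold s in H. replace (INR S / INR n * INR n) with (INR S) in H by (field; lra). lra. }
  assert (HsS : INR S = s * INR n) by (unfold s; field; lra).
  set (m := mm alpha n).
  assert (Hm : m = INR n * ln d) by reflexivity.
  assert (Hm0 : 0 < m) by (rewrite Hm; nra).
  assert (HB : BB alpha n S <= exp (INR n * ln 2) * exp (- (s * m))).
  { unfold BB. fold d. unfold binomR. rewrite (proj2 (Nat.leb_le S n) HSn).
    assert (H1 : 0 <= (1 - / d) ^ (n - S) <= 1).
    { split. apply pow_le. assert (/ d < 1) by (rewrite <- Rinv_1; apply Rinv_lt_contravar; lra). lra.
      apply Rle_trans with (1 ^ (n - S)); [apply pow_incr|rewrite pow1; lra].
      assert (0 < / d) by (apply Rinv_0_lt_compat; lra). assert (/ d < 1) by (rewrite <- Rinv_1; apply Rinv_lt_contravar; lra). split; lra. }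
    assert (H2 : 0 <= (/ d) ^ S) by (apply pow_le; left; apply Rinv_0_lt_compat; lra).
    assert (H3 : Binomial.C n S <= 2 ^ n) by (apply C_le_2pow; auto).
    pose proof (C_nonneg n S).
    assert (E1 : 2 ^ n = exp (INR n * ln 2)) by (rewrite <- ln_pow by lra; rewrite exp_ln; [auto|apply pow_lt; lra]).
    assert (E2 : (/ d) ^ S = exp (- (s * m))).
    { rewrite <- (exp_ln ((/ d) ^ S)) by (apply pow_lt, Rinv_0_lt_compat; lra).
      f_equal. rewrite ln_pow, ln_Rinv by (try apply Rinv_0_lt_compat; lra).
      rewrite HsS, Hm. ring. }
    rewrite <- E1, <- E2.
    assert (Binomial.C n S * (/ d) ^ S * (1 - / d) ^ (n - S) <= Binomial.C n S * (/ d) ^ S).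
    { rewrite <- (Rmult_1_r (Binomial.C n S * (/ d) ^ S)) at 2. apply Rmult_le_compat_l; [nra|lra]. }
    nra. }
  assert (Hs : eta2 <= s <= eta3) by auto.
  assert (HW : WW k alpha r p n S <= exp (r * m * ln (1 + p / (1 - p) * s ^ k))).
  { unfold WW, Rpower. fold d. fold s. fold m. apply exp_le.
    assert (Hk1 : (0 < k)%nat) by lia.
    set (t := s ^ k).
    assert (Ht1 : t <= 1) by (unfold t; rewrite <- (pow1 k); apply pow_incr; lra).
    assert (Hid : / d <= s).
    { assert (/ d < / / eta2) by (apply Rinv_lt_contravar; [apply Rmult_lt_0_compat; [apply Rinv_0_lt_compat|]|]; lra).
      rewrite Rinv_inv in H. lra. }
    assert (Ha1 : 0 < / d ^ k < 1).
    { rewrite <- pow_inv. split. apply pow_lt, Rinv_0_lt_compat; lra.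
      apply pow_lt_1_compat; auto. split. left; apply Rinv_0_lt_compat; lra.
      rewrite <- Rinv_1; apply Rinv_lt_contravar; lra. }
    assert (Hat : / d ^ k <= t) by (unfold t; rewrite <- pow_inv; apply pow_incr; split; [left; apply Rinv_0_lt_compat|]; lra).
    set (a := / d ^ k) in *.
    assert (Hf0 : 0 <= (t - a) / (1 - a)) by (apply Rdiv_le_0_compat; lra).
    assert (Hf1 : (t - a) / (1 - a) <= t).
    { apply (Rmult_le_reg_r (1 - a)); [lra|]. replace ((t - a) / (1 - a) * (1 - a)) with (t - a) by (field; lra). nra. }
    assert (Hq0 : 0 < p / (1 - p)) by (apply Rdiv_lt_0_compat; lra).
    apply Rmult_le_compat_l. nra.
    unfold ff. fold a. fold t. apply ln_le. nra. nra. }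
  assert (Hv : varphi k r p s <= - beta) by (apply Hvar; auto).
  unfold varphi in Hv.
  unfold PPhi. fold m.
  pose proof (exp_pos (r * m * ln (1 + p / (1 - p) * s ^ k))).
  assert (0 <= WW k alpha r p n S) by (unfold WW, Rpower; left; apply exp_pos).
  assert (HP : BB alpha n S * WW k alpha r p n S <=
     exp (INR n * ln 2) * exp (- (s * m)) * exp (r * m * ln (1 + p / (1 - p) * s ^ k))).
  { pose proof (exp_pos (INR n * ln 2)). pose proof (exp_pos (- (s * m))).
    apply Rle_trans with (exp (INR n * ln 2) * exp (- (s * m)) * WW k alpha r p n S).
    apply Rmult_le_compat_r; auto. apply Rmult_le_compat_l; [nra|auto]. }
  eapply Rle_trans; [apply HP|]. rewrite <- !exp_plus. apply exp_le.
  assert (m * (r * ln (1 + p / (1 - p) * s ^ k) - s) <= m * (- beta)) by (apply Rmult_le_compat_l; lra).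
  assert (INR n * ln 2 <= eps * m) by (rewrite Hm; nra).
  nra.
Qed.
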